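(* Let $R$ be a ring of the standard form below, $\omega$ its normalized homogeneous weight and $\mathcal P_{\rm hom}$ the induced partition. Then: (a) $\omega(a)\neq1$ for all $a\in\mathrm{soc}(R)$, so if $R\neq\mathrm{soc}(R)$ then $R\setminus\mathrm{soc}(R)$ is a block of $\mathcal P_{\rm hom}$; (b) there exists a nonzero $a\in R$ with $\omega(a)=0$ if and only if there is an index $i\in\{1,\dots,t\}$ with $q_i=2$ and $n_i\ge2$; and in this case $\mathcal P_{\rm hom}$ is not reflexive.
   Context: Standard form: $R=R_1\times\cdots\times R_t$ with $R_i=R_{i,1}\times\cdots\times R_{i,n_i}$, where each $R_{i,j}$ is a finite local Frobenius ring with $|R_{i,j}/\mathrm{rad}(R_{i,j})|=|\mathrm{soc}(R_{i,j})|=q_i$ for all $j$, and $q_1,\dots,q_t$ distinct ($\mathrm{rad}$ = Jacobson radical, $\mathrm{soc}$ = socle; a finite ring is Frobenius if it admits a generating character, i.e. a character $\chi$ of its additive group such that $r\mapsto(x\mapsto\chi(xr))$ is a bijection onto the character group). The normalized homogeneous weight on $R$ is the unique $\omega:R\to\mathbb Q$ with $\omega(0)=0$, $\omega(x)=\omega(y)$ whenever $Rx=Ry$, and $\sum_{y\in Rx}\omega(y)=|Rx|$ for $x\ne0$; $\mathcal P_{\rm hom}$ is the partition of $R$ into sets of elements of equal weight. For a partition $\mathcal P$ of $R$ and a generating character $\chi$, the right $\chi$-dual partition is given by $a\sim a'$ iff $\sum_{b\in P}\chi(ab)=\sum_{b\in P}\chi(a'b)$ for all blocks $P$; $\mathcal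 P$ is reflexive if the left $\chi$-dual of its right $\chi$-dual equals $\mathcal P$ (left dual: use $\chi(ba)$), equivalently if $\mathcal P$ and its right $\chi$-dual have the same number of blocks. *)

(* Defs.v *)
From HB Require Import structures.
From mathcomp Require Import all_boot all_order all_algebra.
From mathcomp Require Import algC.
Set Implicit Arguments. Unset Strict Implicit. Unset Printing Implicit Defensive.
Import Order.TTheory GRing.Theory Num.Theory.
Local Open Scope ring_scope.

Section FiniteRingNotions.
Variable S : finPzRingType.

Definition left_ideal (I : {set S}) : bool :=
  [&& (0 : S) \in I, [forall x in I, forall y in I, x + y \in I],
      [forall x in I, - x \in I] & [forall r : S, forall x in I, r * x \in I]].

Definition maximal_left_ideal (I : {set S}) : bool :=
  [&& left_ideal I, I != [set: S] &
      [forall J : {set S}, (left_ideal J && (I \proper J)) ==> (J == [set: S])]].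

Definition minimal_left_ideal (I : {set S}) : bool :=
  [&& left_ideal I, I != [set 0] &
      [forall J : {set S}, (left_ideal J && (J \proper I)) ==> (J == [set 0])]].

Definition jac_rad : {set S} := \bigcap_(M : {set S} | maximal_left_ideal M) M.

(* (left) socle: sum of all minimal left ideals, i.e. the smallest left
   ideal containing every minimal left ideal *)
Definition left_soc : {set S} :=
  \bigcap_(J : {set S} | left_ideal J &&
            [forall I : {set S}, minimal_left_ideal I ==> (I \subset J)]) J.

Definition local_ring : bool :=
  #|[set M : {set S} | maximal_left_ideal M]| == 1%N.

Definition card_quot (I : {set S}) : nat :=
  #|[set [set x + r | r in I] | x : S]|.

Definition is_char (chi : S -> algC) : Prop :=
  chi 0 = 1 /\ forall x y, chi (x + y) = chi x * chi y.

Definition generating_char (chi : S -> algC) : Prop :=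
  is_char chi /\
  injective (fun r : S => fun x : S => chi (x * r)) /\
  (forall psi : S -> algC, is_char psi ->
     exists r : S, forall x, psi x = chi (x * r)).

Definition frobenius : Prop := exists chi : S -> algC, generating_char chi.

Definition lprin (x : S) : {set S} := [set y * x | y : S].

Definition homogeneous_weight (w : S -> rat) : Prop :=
  [/\ w 0 = 0,
      (forall x y, lprin x = lprin y -> w x = w y) &
      (forall x, x != 0 -> \sum_(y in lprin x) w y = (#|lprin x|)%:R)].

Definition Phom (w : S -> rat) : {set {set S}} :=
  [set [set y | w y == w x] | x : S].

Definition rdual (chi : S -> algC) (P : {set {set S}}) : {set {set S}} :=
  [set [set a' | [forall B in P,
        \sum_(b in B) chi (a * b) == \sum_(b in B) chi (a' * b)]] | a : S].

Definition ldual (chi : S -> algC) (P : {set {set S}}) : {set {set S}} :=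
  [set [set a' | [forall B in P,
        \sum_(b in B) chi (b * a) == \sum_(b in B) chi (b * a')]] | a : S].

Definition reflexive_partition (chi : S -> algC) (P : {set {set S}}) : Prop :=
  ldual chi (rdual chi P) = P.

End FiniteRingNotions.

(* Main.v *)
Require Import Defs.
From HB Require Import structures.
From mathcomp Require Import all_boot all_order all_algebra.
From mathcomp Require Import algC.
From mathcomp Require Import zify.
From Stdlib Require Import FunctionalExtensionality.
Set Implicit Arguments. Unset Strict Implicit. Unset Printing Implicit Defensive.
Import Order.TTheory GRing.Theory Num.Theory.
Local Open Scope ring_scope.
Section Gen.
Variable S : finPzRingType.

Lemma left_idealP (I : {set S}) : left_ideal I ->
  [/\ 0 \in I, forall x y, x \in I -> y \in I -> x + y \in I,
      forall x, x \in I -> - x \in I & forall r x, x \in I -> r * x \in I].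
Proof.
case/and4P => H0 /forall_inP Hadd /forall_inP Hopp /forallP Hmul; split => //.
- by move=> x y Hx Hy; exact: (forall_inP (Hadd x Hx) y Hy).
- by move=> r x Hx; exact: (forall_inP (Hmul r) x Hx).
Qed.

Lemma left_idealI (I : {set S}) : 0 \in I -> (forall x y, x \in I -> y \in I -> x + y \in I) ->
      (forall x, x \in I -> - x \in I) -> (forall r x, x \in I -> r * x \in I) -> left_ideal I.
Proof.
move=> H0 Hadd Hopp Hmul; apply/and4P; split => //.
- by apply/forall_inP => x Hx; apply/forall_inP => y Hy; apply: Hadd.
- by apply/forall_inP.
- by apply/forallP => r; apply/forall_inP => x Hx; apply: Hmul.
Qed.

Lemma lprinP (y x : S) : reflect (exists r, y = r * x) (y \in lprin x).
Proof.
apply: (iffP imsetP) => [[r _ ->]|[r ->]]; by exists r.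
Qed.

Lemma mem_lprin (x : S) : x \in lprin x.
Proof. by apply/lprinP; exists 1; rewrite mul1r. Qed.

Lemma lprin_ideal (x : S) : left_ideal (lprin x).
Proof.
apply: left_idealI.
- by apply/lprinP; exists 0; rewrite mul0r.
- by move=> a b /lprinP[r ->] /lprinP[s ->]; apply/lprinP; exists (r + s); rewrite mulrDl.
- by move=> a /lprinP[r ->]; apply/lprinP; exists (- r); rewrite mulNr.
- by move=> r a /lprinP[s ->]; apply/lprinP; exists (r * s); rewrite mulrA.
Qed.

Lemma lprin_sub (y x : S) : y \in lprin x -> lprin y \subset lprin x.
Proof.
move=> /lprinP[r ->]; apply/subsetP => z /lprinP[s ->].
by apply/lprinP; exists (s * r); rewrite mulrA.
Qed.

Lemma socP (x : S) : reflect (forall J, left_ideal J ->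
   (forall M, minimal_left_ideal M -> M \subset J) -> x \in J) (x \in left_soc S).
Proof.
apply: (iffP bigcapP) => H J.
- by move=> HJ HM; apply: H; rewrite HJ; apply/forall_inP => M /HM.
- by case/andP => HJ /forall_inP HM; apply: H => // M /HM.
Qed.

Lemma soc_ideal : left_ideal (left_soc S).
Proof.
apply: left_idealI.
- apply/socP => J HJ _. idtac. case/left_idealP: HJ => //.
- move=> x y /socP Hx /socP Hy; apply/socP => J HJ HM.
  by case/left_idealP: (HJ) => _ Ha _ _; apply: Ha; [apply: Hx|apply: Hy].
- move=> x /socP Hx; apply/socP => J HJ HM.
  by case/left_idealP: (HJ) => _ _ Ha _; apply: Ha; apply: Hx.
- move=> r x /socP Hx; apply/socP => J HJ HM.
  by case/left_idealP: (HJ) => _ _ _ Ha; apply: Ha; apply: Hx.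
Qed.

Lemma min_sub_soc (M : {set S}) : minimal_left_ideal M -> M \subset left_soc S.
Proof.
move=> HM; apply/subsetP => x Hx; apply/socP => J _ HJ.
exact: (subsetP (HJ M HM)).
Qed.

Lemma soc_sub (J : {set S}) : left_ideal J -> (forall M, minimal_left_ideal M -> M \subset J) ->
  left_soc S \subset J.
Proof. by move=> HJ HM; apply/subsetP => x /socP; apply. Qed.

Lemma min_exists (I : {set S}) : left_ideal I -> I != [set 0] ->
  exists M : {set S}, minimal_left_ideal M && (M \subset I).
Proof.
move=> HI HI0.
pose P := fun J : {set S} => [&& left_ideal J, J \subset I & J != [set 0]].
have PI : P I by rewrite /P HI subxx HI0.
case: (arg_minnP (fun J : {set S} => #|J|) PI) => M /and3P[HM1 HM2 HM3] Hmin.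
exists M; rewrite HM2 andbT; apply/and3P; split => //.
apply/forallP => J; apply/implyP => /andP[HJ HJM].
apply/negPn/negP => HJ0.
have PJ : P J by rewrite /P HJ HJ0 (subset_trans (proper_sub HJM) HM2).
by have := Hmin J PJ; rewrite leqNgt proper_card.
Qed.

End Gen.
Lemma card_imset_le (T : finType)
  (TA : finType) (TB : finType) (f' : T -> TA) (g' : T -> TB) :
  (forall x y, g' x = g' y -> f' x = f' y) ->
  (#|[set f' x | x : T]| <= #|[set g' x | x : T]|)%N.
Proof.
move=> Hfg.
case: (pickP (@predT T)) => [x0 _|HT]; last first.
  rewrite (_ : [set f' x | x : T] = set0) ?cards0 //.
  by apply/setP => F; rewrite inE; apply/imsetP => -[x]; move: (HT x).
pose pre F := odflt x0 [pick x | f' x == F].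
have Hpre F : F \in [set f' x | x : T] -> f' (pre F) = F.
  case/imsetP => x _ ->; rewrite /pre; case: pickP => [y /eqP //|/(_ x)].
  by rewrite eqxx.
rewrite -(@card_in_imset _ _ (fun F => g' (pre F))); last first.
  by move=> F1 F2 H1 H2 /Hfg; rewrite !Hpre.
by apply: subset_leq_card; apply/subsetP => _ /imsetP[F _ ->]; apply: imset_f.
Qed.

Section Local.
Variable S : finPzRingType.
Variable q : nat.
Hypothesis Hloc : local_ring S.
Hypothesis Hrad : card_quot (jac_rad S) = q.
Hypothesis Hsoc : #|left_soc S| = q.

Lemma local_max : exists J0 : {set S},
  (forall M, maximal_left_ideal M = (M == J0)) /\ jac_rad S = J0.
Proof.
case: (cards1P Hloc) => J0 HJ0.
have HM M : maximal_left_ideal M = (M == J0).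
  by have := congr1 (fun A : {set {set S}} => M \in A) HJ0; rewrite /= !inE.
exists J0; split => //.
by rewrite /jac_rad (eq_bigl _ _ HM) big_pred1_eq.
Qed.

Lemma one_neq0 : (1 : S) != 0.
Proof.
apply/negP => /eqP H10.
case: local_max => J0 [HM _].
have := HM J0; rewrite eqxx => /and3P[HJ HJT _].
case/negP: HJT; apply/eqP/setP => x; rewrite !inE.
by rewrite -(mulr1 x) H10 mulr0; case/left_idealP: HJ.
Qed.

Lemma min_lprin (M : {set S}) m : minimal_left_ideal M -> m \in M -> m != 0 ->
  M = lprin m.
Proof.
move=> /and3P[HM HM0 /forallP Hmin] Hm Hm0.
have sub : lprin m \subset M.
  by apply/subsetP => _ /lprinP[r ->]; case/left_idealP: HM => _ _ _; apply.
case: (eqVproper sub) => [-> //|Hp].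
have := implyP (Hmin (lprin m)); rewrite lprin_ideal Hp => /(_ isT) /eqP H.
by move: (mem_lprin m); rewrite H inE (negPf Hm0).
Qed.

Lemma card_quot_lprin (m : S) :
  card_quot [set s | s * m == 0] = #|lprin m|.
Proof.
set ann := [set s | s * m == 0].
pose f x := [set x + r | r in ann].
have Hsub x y : x * m = y * m -> f x \subset f y.
  move=> Hxy; apply/subsetP => _ /imsetP[r Hr ->].
  apply/imsetP; exists (x - y + r); last by rewrite addrA (addrC y) subrK.
  move: Hr; rewrite !inE !mulrDl mulNr Hxy => /eqP ->.
  by rewrite subrr addr0.
have Hf x y : f x = f y <-> x * m = y * m.
  split => [Hxy|Hxy]; last by apply/eqP; rewrite eqEsubset !Hsub.
  have : y \in f x by rewrite Hxy; apply/imsetP; exists 0; rewrite ?addr0 // inE mul0r.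
  case/imsetP => r; rewrite inE => /eqP Hr ->; by rewrite mulrDl Hr addr0.
rewrite /card_quot /lprin; apply/eqP; rewrite eqn_leq; apply/andP; split.
  by apply: card_imset_le => x y Hxy; apply/Hf.
by apply: card_imset_le => x y Hxy; apply/Hf.
Qed.

Lemma card_min (M : {set S}) : minimal_left_ideal M -> #|M| = q.
Proof.
move=> HMmin; have := HMmin; case/and3P => HM HM0 _.
have [m Hm Hm0] : exists2 m, m \in M & m != 0.
  case/left_idealP: (HM) => H0 _ _ _.
  have : ~~ (M \subset [set 0]).
    by apply: contra HM0 => Hs; rewrite eqEsubset Hs sub1set.
  by case/subsetPn => m Hm; rewrite inE; exists m.
rewrite (min_lprin HMmin Hm Hm0) -card_quot_lprin -Hrad; congr card_quot.
case: local_max => K0 [HK0 ->]; apply/eqP; rewrite -HK0.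
set ann := [set s | s * m == 0].
have Hann : left_ideal ann.
  apply: left_idealI; rewrite ?inE ?mul0r //.
  - by move=> x y; rewrite !inE mulrDl => /eqP -> /eqP ->; rewrite addr0.
  - by move=> x; rewrite !inE mulNr => /eqP ->; rewrite oppr0.
  - by move=> r x; rewrite !inE -mulrA => /eqP ->; rewrite mulr0.
apply/and3P; split => //.
  apply/negP => /eqP Hall; have : (1 : S) \in ann by rewrite Hall inE.
  by rewrite inE mul1r (negPf Hm0).
apply/forallP => J; apply/implyP => /andP[HJ Hp].
pose Jm := [set l * m | l in J].
have HJm : left_ideal Jm.
  case/left_idealP: HJ => J0 JD JN JM.
  apply: left_idealI.
  - by apply/imsetP; exists 0; rewrite ?mul0r.
  - by move=> _ _ /imsetP[a Ha ->] /imsetP[b Hb ->]; apply/imsetP; exists (a + b); rewrite ?mulrDl ?JD.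
  - by move=> _ /imsetP[a Ha ->]; apply/imsetP; exists (- a); rewrite ?mulNr ?JN.
  - by move=> r _ /imsetP[a Ha ->]; apply/imsetP; exists (r * a); rewrite ?mulrA ?JM.
have HJmsub : Jm \subset lprin m.
  by apply/subsetP => _ /imsetP[l _ ->]; apply/lprinP; exists l.
have HJm0 : Jm != [set 0].
  case/properP: Hp => _ [l Hl Hnl].
  apply/negP => /eqP HJm0.
  have : l * m \in Jm by apply: imset_f.
  by rewrite HJm0 inE; move: Hnl; rewrite inE => /negPf ->.
have HJmeq : Jm = lprin m.
  case/and3P: (HMmin) => _ _ /forallP Hmin.
  rewrite (min_lprin HMmin Hm Hm0) in Hmin.
  case: (eqVproper HJmsub) => [//|Hpr].
  by have := implyP (Hmin Jm); rewrite HJm Hpr (negPf HJm0) => /(_ isT).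
have : m \in Jm by rewrite HJmeq mem_lprin.
case/imsetP => l Hl Hml.
case/left_idealP: HJ => _ JD _ JM.
have H1l : 1 - l \in J.
  apply: (subsetP (proper_sub Hp)); rewrite inE mulrBl mul1r -Hml subrr //.
have H1 : (1 : S) \in J by rewrite -(subrK l 1) JD.
apply/eqP/setP => x; rewrite inE -(mulr1 x) JM //.
Qed.

Lemma exists_min : exists M : {set S}, minimal_left_ideal M.
Proof.
have : left_ideal [set: S].
  by apply: left_idealI => *; rewrite inE.
move/min_exists => /(_ _) [].
  apply/negP => /eqP H; have : (1 : S) \in [set: S] by rewrite inE.
  by rewrite H inE (negPf one_neq0).
by move=> M /andP[HM _]; exists M.
Qed.

Lemma min_unique (M M' : {set S}) :
  minimal_left_ideal M -> minimal_left_ideal M' -> M = M'.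
Proof.
move=> HM HM'; apply/eqP/negPn/negP => Hne.
have HMi := HM; case/and3P: HMi => HMl _ _.
have HMi' := HM'; case/and3P: HMi' => HMl' HM0' /forallP Hmin'.
have [m' Hm' Hm'M] : exists2 m', m' \in M' & m' \notin M.
  apply/exists_inP; rewrite -(negbK [exists _ in _, _]) negb_exists_in.
  apply/negP => /forall_inP Hsub.
  have Hs : M' \subset M by apply/subsetP => x /Hsub /negbNE.
  case/and3P: HM => _ HM0 /forallP Hmin.
  have := implyP (Hmin M'); rewrite HMl' (negPf HM0').
  by rewrite properEneq Hs andbT eq_sym Hne => /(_ isT).
case/left_idealP: (HMl) => M0 MD MN _.
have Hdisj : [disjoint M & [set a + m' | a in M]].
  apply/pred0P => x /=; apply/negP => /andP[HxM /imsetP[a Ha Hx]].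
  case/negP: Hm'M; have -> : m' = x - a by rewrite Hx addrC addKr.
  by rewrite MD ?MN.
have Hsub : M :|: [set a + m' | a in M] \subset left_soc S.
  rewrite subUset min_sub_soc //=; apply/subsetP => _ /imsetP[a Ha ->].
  case: (left_idealP (soc_ideal S)) => _ SD _ _; apply: SD.
    exact: (subsetP (min_sub_soc HM)).
  exact: (subsetP (min_sub_soc HM')).
have := subset_leq_card Hsub; rewrite Hsoc cardsU.
have -> : M :&: [set a + m' | a in M] = set0.
  by apply/eqP; rewrite setI_eq0.
rewrite cards0 subn0 card_imset; last exact: addIr.
rewrite card_min //.
have : (0 < q)%N by rewrite -(card_min HM) card_gt0; apply/set0Pn; exists 0.
lia.
Qed.

Lemma soc_eq_min (M : {set S}) : minimal_left_ideal M -> left_soc S = M.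
Proof.
move=> HM; apply/eqP; rewrite eqEsubset min_sub_soc // andbT.
case/and3P: (HM) => HMl _ _.
by apply: soc_sub => // M' HM'; rewrite (min_unique HM' HM).
Qed.

Lemma soc_sub_lprin (y : S) : y != 0 -> left_soc S \subset lprin y.
Proof.
move=> Hy; case: (min_exists (lprin_ideal y)).
  apply/negP => /eqP H; have := mem_lprin y; rewrite H inE.
  by rewrite (negPf Hy).
by move=> M /andP[HM Hs]; rewrite (soc_eq_min HM).
Qed.

Lemma q_gt1 : (1 < q)%N.
Proof.
case: exists_min => M HM; rewrite -(card_min HM).
case/and3P: (HM) => HMl HM0 _.
rewrite -(cards1 (0 : S)); apply: proper_card.
rewrite properEneq eq_sym HM0 sub1set; by case/left_idealP: HMl.
Qed.

End Local.
Definition cq (q : nat) : rat := - ((q.-1)%:R)^-1.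

Definition fv (S : finPzRingType) (c : rat) (v : S) : rat :=
  if v == 0 then 1 else if v \in left_soc S then c else 0.

Lemma sum_fv (S : finPzRingType) (q : nat) : local_ring S ->
  card_quot (jac_rad S) = q -> #|left_soc S| = q ->
  forall y : S, y != 0 -> \sum_(v in lprin y) fv (cq q) v = 0.
Proof.
move=> Hl Hr Hs y Hy.
have Hq : (1 < q)%N := q_gt1 Hl Hr.
have Hsub : left_soc S \subset lprin y := soc_sub_lprin Hl Hr Hs Hy.
rewrite (big_setID (left_soc S)) /=.
rewrite (setIidPr Hsub).
rewrite [X in _ + X]big1 ?addr0; last first.
  move=> v; rewrite !inE => /andP[Hv _]; rewrite /fv (negPf Hv).
  by case: eqP => // Hv0; move: Hv; rewrite Hv0; case: (left_idealP (soc_ideal S)) => ->.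
have S0 : (0 : S) \in left_soc S by case: (left_idealP (soc_ideal S)).
rewrite (big_setD1 0) //= {1}/fv eqxx.
rewrite (eq_bigr (fun _ => cq q)); last first.
  by move=> v; rewrite !inE => /andP[/negPf Hv Hs']; rewrite /fv Hv Hs'.
rewrite sumr_const (_ : #|_| = q.-1); last first.
  by move: (cardsD1 0 (left_soc S)); rewrite S0 Hs /= => ->; rewrite add1n.
rewrite -mulr_natr /cq mulNr mulVf //.
by rewrite pnatr_eq0; lia.
Qed.
Definition upd (I : eqType) (T : I -> Type) (f : forall i, T i) (i0 : I) (v : T i0) :
  forall i, T i :=
  fun i => match i0 =P i with ReflectT e => eq_rect i0 T v i e | ReflectF _ => f i end.

Lemma upd_eq (I : eqType) (T : I -> Type) (f : forall i, T i) (i0 : I) (v : T i0) :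
  upd f v i0 = v.
Proof. rewrite /upd; case: (i0 =P i0) => [e|//]; by rewrite (eq_irrelevance e erefl). Qed.

Lemma upd_neq (I : eqType) (T : I -> Type) (f : forall i, T i) (i0 : I) (v : T i0) i :
  i != i0 -> upd f v i = f i.
Proof. move=> Hi; rewrite /upd; case: (i0 =P i) => [e|//]; by rewrite e eqxx in Hi. Qed.

Unset Implicit Arguments.
Section Big.
Variables (R : finPzRingType) (t : nat) (n q : 'I_t -> nat).
Variable Rij : forall i : 'I_t, 'I_(n i) -> finPzRingType.
Variable pi : forall (i : 'I_t) (j : 'I_(n i)), {rmorphism R -> Rij i j}.
Hypothesis pi_inj : forall x y : R, (forall i j, pi i j x = pi i j y) -> x = y.
Hypothesis pi_surj : forall g : (forall (i : 'I_t) (j : 'I_(n i)), Rij i j),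
      exists x : R, forall i j, pi i j x = g i j.
Hypothesis Hloc : forall i j, local_ring (Rij i j).
Hypothesis Hrad : forall i j, card_quot (jac_rad (Rij i j)) = q i.
Hypothesis Hsoc : forall i j, #|left_soc (Rij i j)| = q i.

Notation tg i j := (Tagged (fun i0 : 'I_t => 'I_(n i0)) j).

Lemma surjb (g : forall (i : 'I_t) (j : 'I_(n i)), Rij i j) :
  exists x : R, [forall i, [forall j, pi i j x == g i j]].
Proof.
case: (pi_surj g) => x Hx; exists x.
by apply/forallP => i; apply/forallP => j; rewrite Hx.
Qed.

Definition mk (g : forall (i : 'I_t) (j : 'I_(n i)), Rij i j) : R := xchoose (surjb g).

Lemma mkE g i j : pi i j (mk g) = g i j.
Proof. by have := xchooseP (surjb g) => /forallP /(_ i) /forallP /(_ j) /eqP. Qed.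

Definition Tf (k : {i : 'I_t & 'I_(n i)}) := Rij (tag k) (tagged k).

Definition sgl i0 (j0 : 'I_(n i0)) (s : Rij i0 j0) : R :=
  mk (fun i j => @upd _ Tf (fun _ => 0) (tg i0 j0) s (tg i j)).

Arguments sgl {i0 j0} s.

Lemma sgl_eq (i0 : 'I_t) (j0 : 'I_(n i0)) (s : Rij i0 j0) : pi i0 j0 (sgl s) = s.
Proof. by rewrite mkE upd_eq. Qed.

Lemma sgl_neq (i0 : 'I_t) (j0 : 'I_(n i0)) (s : Rij i0 j0) i (j : 'I_(n i)) : tg i j != tg i0 j0 -> pi i j (sgl s) = 0.
Proof. by move=> H; rewrite mkE upd_neq. Qed.

Arguments sgl_eq {i0 j0} s.
Arguments sgl_neq {i0 j0} s {i j}.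

Lemma tg_neq i (j : 'I_(n i)) i' (j' : 'I_(n i')) : i != i' -> tg i j != tg i' j'.
Proof. by apply: contra => /eqP H; rewrite -[i]/(tag (tg i j)) H. Qed.

Lemma tg_eq i (j j' : 'I_(n i)) : (tg i j == tg i j') = (j == j').
Proof. by rewrite eq_Tagged. Qed.

Lemma pi0 i j : pi i j 0 = 0. Proof. exact: rmorph0. Qed.

Lemma neq0_comp (x : R) : x != 0 -> exists i j, pi i j x != 0.
Proof.
move=> Hx; suff : [exists i, [exists j, pi i j x != 0]].
  by case/existsP => i /existsP [j H]; exists i, j.
case: (boolP [exists i, [exists j, pi i j x != 0]]) => // H0.
move: H0; rewrite negb_exists => /forallP H.
case/negP: Hx; apply/eqP/pi_inj => i j; rewrite pi0.
by move: (H i); rewrite negb_exists => /forallP /(_ j) /negPn /eqP.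
Qed.

Arguments neq0_comp {x}.

Lemma lprinR (x y : R) : (y \in lprin x) = [forall i, [forall j, pi i j y \in lprin (pi i j x)]].
Proof.
apply/idP/idP.
  case/lprinP => r ->; apply/forallP => i; apply/forallP => j.
  by apply/lprinP; exists (pi i j r); rewrite rmorphM.
move=> H.
have Hex i j : exists r, pi i j y == r * pi i j x.
  by move: H => /forallP /(_ i) /forallP /(_ j) /lprinP[r ->]; exists r.
apply/lprinP; exists (mk (fun i j => xchoose (Hex i j))).
apply: pi_inj => i j; rewrite rmorphM mkE.
by apply/eqP; apply: (xchooseP (Hex i j)).
Qed.

Lemma socC i j : left_ideal (left_soc (Rij i j)).
Proof. exact: soc_ideal. Qed.

Lemma soc0C i j : (0 : Rij i j) \in left_soc (Rij i j).
Proof. by case: (left_idealP (socC i j)). Qed.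

Lemma socMC i j (r x : Rij i j) : x \in left_soc (Rij i j) -> r * x \in left_soc (Rij i j).
Proof. by case: (left_idealP (socC i j)) => _ _ _; apply. Qed.

Lemma socDC i j (x y : Rij i j) : x \in left_soc (Rij i j) -> y \in left_soc (Rij i j) ->
  x + y \in left_soc (Rij i j).
Proof. by case: (left_idealP (socC i j)) => _ H _ _; apply: H. Qed.

Lemma socNC i j (x : Rij i j) : x \in left_soc (Rij i j) -> - x \in left_soc (Rij i j).
Proof. by case: (left_idealP (socC i j)) => _ _ H _; apply: H. Qed.

Lemma soc_lprinC i j (y : Rij i j) : y != 0 -> left_soc (Rij i j) \subset lprin y.
Proof. exact: (soc_sub_lprin (Hloc i j) (Hrad i j) (Hsoc i j)). Qed.

Lemma soc_nz i j : exists2 m : Rij i j, m \in left_soc (Rij i j) & m != 0.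
Proof.
have Hq : (1 < q i)%N := q_gt1 (Hloc i j) (Hrad i j).
have : ~~ (left_soc (Rij i j) \subset [set 0]).
  apply/negP => /subset_leq_card; rewrite cards1 Hsoc; lia.
by case/subsetPn => m Hm; rewrite inE => Hm0; exists m.
Qed.

Definition L0 : {set R} :=
  [set x | [forall i, [forall j, pi i j x \in left_soc (Rij i j)]]].

Lemma L0P x : reflect (forall i j, pi i j x \in left_soc (Rij i j)) (x \in L0).
Proof.
rewrite inE; apply: (iffP forallP) => H i.
  by move=> j; move: (H i) => /forallP.
by apply/forallP => j; apply: H.
Qed.

Lemma L0_ideal : left_ideal L0.
Proof.
apply: left_idealI.
- by apply/L0P => i j; rewrite pi0 soc0C.
- move=> x y /L0P Hx /L0P Hy; apply/L0P => i j; rewrite rmorphD; exact: socDC (Hx i j) (Hy i j).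
- move=> x /L0P Hx; apply/L0P => i j; rewrite rmorphN; exact: socNC (Hx i j).
- move=> r x /L0P Hx; apply/L0P => i j; rewrite rmorphM; exact: socMC (Hx i j).
Qed.

Lemma min_sub_L0 (I : {set R}) : minimal_left_ideal I -> I \subset L0.
Proof.
case/and3P => HI HI0 /forallP Hmin.
have [z Hz Hz0] : exists2 z, z \in I & z != 0.
  have : ~~ (I \subset [set 0]).
    by apply: contra HI0 => Hs; rewrite eqEsubset Hs sub1set; case/left_idealP: HI.
  by case/subsetPn => z Hz; rewrite inE => Hz0; exists z.
case: (neq0_comp Hz0) => i [j Hij].
case: (soc_nz i j) => m Hm Hm0.
case/lprinP: (subsetP (soc_lprinC _ _ _ Hij) m Hm) => s Hs.
set u := sgl s * z.
have HuI : u \in I by case/left_idealP: HI => _ _ _; apply.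
have HuL : u \in L0.
  apply/L0P => i' j'; rewrite rmorphM.
  case: (eqVneq (tg i' j') (tg i j)) => [E|E].
    have Ei : i' = i by move: (congr1 tag E).
    subst i'; move/eqP: E; rewrite tg_eq => /eqP ->.
    by rewrite sgl_eq -Hs.
  by rewrite sgl_neq // mul0r soc0C.
have Hu0 : u != 0.
  apply/negP => /eqP Hu; move: (congr1 (pi i j) Hu).
  by rewrite rmorphM sgl_eq -Hs pi0 => /eqP; rewrite (negPf Hm0).
have HIL : left_ideal (I :&: L0).
  case/left_idealP: HI => A1 A2 A3 A4; case/left_idealP: L0_ideal => B1 B2 B3 B4.
  apply: left_idealI.
  - by rewrite in_setI A1 B1.
  - by move=> x y; rewrite !in_setI => /andP[? ?] /andP[? ?]; rewrite A2 ?B2.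
  - by move=> x; rewrite !in_setI => /andP[? ?]; rewrite A3 ?B3.
  - by move=> r x; rewrite !in_setI => /andP[? ?]; rewrite A4 ?B4.
have Hsub : I :&: L0 \subset I by apply: subsetIl.
case: (eqVproper Hsub) => [E|Hp]; first by move: (subsetIr I L0); rewrite E.
have := implyP (Hmin (I :&: L0)); rewrite HIL Hp => /(_ isT) /eqP E.
have : u \in I :&: L0 by rewrite in_setI HuI HuL.
by rewrite E inE (negPf Hu0).
Qed.
Lemma eq_single (i0 : 'I_t) (j0 : 'I_(n i0)) (x y : R) :
  (forall i j, tg i j != tg i0 j0 -> pi i j x = 0) ->
  (forall i j, tg i j != tg i0 j0 -> pi i j y = 0) ->
  pi i0 j0 x = pi i0 j0 y -> x = y.
Proof.
move=> Hx Hy Hxy; apply: pi_inj => i j.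
case: (eqVneq (tg i j) (tg i0 j0)) => [E|E]; last by rewrite Hx ?Hy.
have Ei : i = i0 by move: (congr1 tag E).
subst i; move/eqP: E; rewrite tg_eq => /eqP ->; exact: Hxy.
Qed.

Lemma sgl_min (i0 : 'I_t) (j0 : 'I_(n i0)) (s : Rij i0 j0) :
  s \in left_soc (Rij i0 j0) -> s != 0 -> minimal_left_ideal (lprin (sgl s)).
Proof.
move=> Hs Hs0; apply/and3P; split; first exact: lprin_ideal.
  apply/negP => /eqP H; have := mem_lprin (sgl s); rewrite H inE => /eqP.
  by move/(congr1 (pi i0 j0)); rewrite sgl_eq pi0; apply/eqP.
apply/forallP => J; apply/implyP => /andP[HJ Hp]; apply/negPn/negP => HJ0.
have [y Hy Hy0] : exists2 y, y \in J & y != 0.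
  have : ~~ (J \subset [set 0]).
    by apply: contra HJ0 => Hs'; rewrite eqEsubset Hs' sub1set; case/left_idealP: HJ.
  by case/subsetPn => z Hz; rewrite inE => Hz0; exists z.
have Hyoff i j : tg i j != tg i0 j0 -> pi i j y = 0.
  move=> Hij; case/lprinP: (subsetP (proper_sub Hp) y Hy) => r ->.
  by rewrite rmorphM sgl_neq // mulr0.
have Hy0' : pi i0 j0 y != 0.
  apply: contra Hy0 => /eqP H; apply/eqP; apply: (eq_single i0 j0 _ _ Hyoff) => //.
    by move=> i j _; rewrite pi0.
  by rewrite H pi0.
have Hsub : lprin (sgl s) \subset J.
  apply/subsetP => u /lprinP [r Hu].
  have Hu' : pi i0 j0 u \in lprin (pi i0 j0 y).
    apply: (subsetP (soc_lprinC _ _ _ Hy0')).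
    by rewrite Hu rmorphM sgl_eq; apply: socMC.
  case/lprinP: Hu' => s' Hs'.
  have -> : u = sgl s' * y.
    apply: (eq_single i0 j0).
    - by move=> i j Hij; rewrite Hu rmorphM sgl_neq // mulr0.
    - by move=> i j Hij; rewrite rmorphM sgl_neq // mul0r.
    - by rewrite rmorphM sgl_eq.
  by case/left_idealP: HJ => _ _ _; apply.
by move: Hp; rewrite properE Hsub andbF.
Qed.

Lemma socR (x : R) : x \in left_soc R <-> forall i j, pi i j x \in left_soc (Rij i j).
Proof.
split.
  move=> Hx; apply/L0P; apply: (subsetP _ x Hx).
  by apply: soc_sub; [exact: L0_ideal | exact: min_sub_L0].
move=> Hx; apply/socP => J HJ HM.
have Hdec : x = \sum_(i < t) \sum_(j < n i) sgl (pi i j x).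
  apply: pi_inj => a b; rewrite rmorph_sum.
  under eq_bigr => i _ do rewrite rmorph_sum.
  rewrite (bigD1 a) //= [X in _ + X]big1 ?addr0; last first.
    move=> i Hi; rewrite big1 // => j _; rewrite sgl_neq //.
    by apply: tg_neq; rewrite eq_sym.
  rewrite (bigD1 b) //= sgl_eq [X in _ + X]big1 ?addr0 // => j Hj.
  by rewrite sgl_neq // tg_eq eq_sym.
rewrite Hdec; case/left_idealP: (HJ) => J0 JD _ _.
apply: (big_ind (fun z => z \in J)) => // i _.
apply: (big_ind (fun z => z \in J)) => // j _.
case: (eqVneq (pi i j x) 0) => [E|E].
  rewrite E (_ : sgl 0 = 0) //; apply: (eq_single i j).
  - by move=> ? ? ?; rewrite sgl_neq.
  - by move=> ? ? ?; rewrite pi0.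
  - by rewrite sgl_eq pi0.
by apply: (subsetP (HM _ (sgl_min _ _ _ (Hx i j) E))); apply: mem_lprin.
Qed.
Lemma comp_ind (i0 : 'I_t) (j0 : 'I_(n i0)) (P : forall i, 'I_(n i) -> Prop) :
  P i0 j0 -> (forall i j, tg i j != tg i0 j0 -> P i j) -> forall i j, P i j.
Proof.
move=> H0 H1 i j; case: (eqVneq (tg i j) (tg i0 j0)) => [E|E]; last exact: H1.
have Ei : i = i0 by move: (congr1 tag E).
by subst i; move/eqP: E; rewrite tg_eq => /eqP ->.
Qed.

Lemma fv0 (S : finPzRingType) c : fv c (0 : S) = 1.
Proof. by rewrite /fv eqxx. Qed.

Lemma fv_class (S : finPzRingType) c (u v : S) :
  u \in lprin v -> v \in lprin u -> fv c u = fv c v.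
Proof.
move=> /lprinP[r Hu] /lprinP[s Hv]; rewrite /fv.
have E0 : (u == 0) = (v == 0).
  apply/eqP/eqP => H; [by rewrite Hv H mulr0 | by rewrite Hu H mulr0].
have ES : (u \in left_soc S) = (v \in left_soc S).
  by apply/idP/idP => H; [rewrite Hv | rewrite Hu]; case: (left_idealP (soc_ideal S)) => _ _ _; apply.
by rewrite E0 ES.
Qed.

Definition G (x : R) : rat := \prod_(i < t) \prod_(j < n i) fv (cq (q i)) (pi i j x).

Lemma G0 : G 0 = 1.
Proof. rewrite /G; apply: big1 => i _; apply: big1 => j _; by rewrite pi0 fv0. Qed.

Lemma lprinRP (x y : R) : y \in lprin x -> forall i j, pi i j y \in lprin (pi i j x).
Proof. by rewrite lprinR => /forallP H i j; move: (H i) => /forallP. Qed.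

Lemma G_class (x y : R) : lprin y = lprin x -> G y = G x.
Proof.
move=> E; have Hy : y \in lprin x by rewrite -E mem_lprin.
have Hx : x \in lprin y by rewrite E mem_lprin.
rewrite /G; apply: eq_bigr => i _; apply: eq_bigr => j _.
by apply: fv_class; apply: lprinRP.
Qed.

Lemma G_single (i0 : 'I_t) (j0 : 'I_(n i0)) (b : R) :
  (forall i j, tg i j != tg i0 j0 -> pi i j b = 0) ->
  G b = fv (cq (q i0)) (pi i0 j0 b).
Proof.
move=> Hb; rewrite /G (bigD1 i0) //= [X in _ * X]big1 ?mulr1; last first.
  move=> i Hi; apply: big1 => j _; rewrite Hb ?fv0 //.
  by apply: tg_neq.
rewrite (bigD1 j0) //= [X in _ * X]big1 ?mulr1 // => j Hj.
by rewrite Hb ?fv0 // tg_eq.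
Qed.

Definition prA (i0 : 'I_t) (j0 : 'I_(n i0)) (y : R) : R :=
  mk (fun i j => if tg i j == tg i0 j0 then 0 else pi i j y).
Definition prB (i0 : 'I_t) (j0 : 'I_(n i0)) (y : R) : R :=
  mk (fun i j => if tg i j == tg i0 j0 then pi i j y else 0).
Lemma prAE (i0 : 'I_t) (j0 : 'I_(n i0)) y i j :
  pi i j (prA i0 j0 y) = if tg i j == tg i0 j0 then 0 else pi i j y.
Proof. by rewrite /prA mkE. Qed.
Lemma prBE (i0 : 'I_t) (j0 : 'I_(n i0)) y i j :
  pi i j (prB i0 j0 y) = if tg i j == tg i0 j0 then pi i j y else 0.
Proof. by rewrite /prB mkE. Qed.

Lemma sumG (x : R) : x != 0 -> \sum_(y in lprin x) G y = 0.
Proof.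
move=> Hx; case: (neq0_comp Hx) => i0 [j0 Hx0].
pose pA := prA i0 j0. pose pB := prB i0 j0.
have pAE y i j : pi i j (pA y) = if tg i j == tg i0 j0 then 0 else pi i j y.
  exact: prAE.
have pBE y i j : pi i j (pB y) = if tg i j == tg i0 j0 then pi i j y else 0.
  exact: prBE.
clearbody pA pB.
have HGAB y : G y = G (pA y) * G (pB y).
  rewrite /G -big_split; apply: eq_bigr => i _; rewrite -big_split; apply: eq_bigr => j _.
  by rewrite pAE pBE; case: ifP => _; rewrite fv0 ?Monoid.mul1m ?Monoid.mulm1.
have Hinj : {in lprin x &, injective (fun y => (pA y, pB y))}.
  move=> y1 y2 _ _ E; have E1 : pA y1 = pA y2 := congr1 fst E.
  have E2 : pB y1 = pB y2 := congr1 snd E; apply: pi_inj => i j.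
  have := congr1 (pi i j) E1; have := congr1 (pi i j) E2; rewrite !pAE !pBE.
  by case: ifP => _; [move=> -> | move=> _ ->].
set A := [set pA y | y in lprin x]; set B := [set pB y | y in lprin x].
have Himg : [set (pA y, pB y) | y in lprin x] = setX A B.
  apply/setP => -[u v]; rewrite in_setX; apply/imsetP/andP.
    case=> y Hy E; have -> : u = pA y := congr1 fst E.
    have -> : v = pB y := congr1 snd E; split; exact: imset_f.
  case=> /imsetP[y1 Hy1 ->] /imsetP[y2 Hy2 ->].
  exists (mk (fun i j => if tg i j == tg i0 j0 then pi i j y2 else pi i j y1)).
    rewrite lprinR; apply/forallP => i; apply/forallP => j; rewrite mkE.
    by case: ifP => _; apply: lprinRP.
  congr pair; apply: pi_inj => i j; rewrite ?pAE ?pBE mkE; by case: ifP.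
rewrite (eq_bigr _ (fun y _ => HGAB y)).
have -> : \sum_(y in lprin x) G (pA y) * G (pB y) = \sum_(p in setX A B) G p.1 * G p.2.
  by rewrite -Himg (big_imset _ Hinj).
have -> : \sum_(p in setX A B) G p.1 * G p.2 = \sum_(a in A) \sum_(b in B) G a * G b.
  by rewrite pair_big_dep; apply: eq_bigl => -[a b]; rewrite in_setX.
have Boff b : b \in B -> forall i j, tg i j != tg i0 j0 -> pi i j b = 0.
  by case/imsetP => y _ -> i j Hij; rewrite pBE (negPf Hij).
have hB : \sum_(b in B) G b = 0.
  rewrite (eq_bigr (fun b => fv (cq (q i0)) (pi i0 j0 b))); last first.
    by move=> b Hb; apply: (G_single i0 j0); apply: Boff.
  rewrite -(big_imset (fun s => fv (cq (q i0)) s)); last first.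
    by move=> b1 b2 H1 H2 E; apply: (eq_single i0 j0 _ _ (Boff _ H1) (Boff _ H2)).
  have -> : [set pi i0 j0 b | b in B] = lprin (pi i0 j0 x).
    apply/setP => s; apply/imsetP/idP.
      case=> b /imsetP[y Hy ->] ->; rewrite pBE eqxx; move: (lprinRP x y Hy i0 j0) => H; exact H.
    move=> Hs; exists (pB (sgl s)); last by rewrite pBE eqxx sgl_eq.
    apply: imset_f; rewrite lprinR; apply/forallP => i; apply/forallP => j.
    move: i j; apply: (comp_ind i0 j0); first by rewrite sgl_eq.
    by move=> i j Hij; rewrite sgl_neq //; apply/lprinP; exists 0; rewrite mul0r.
  exact: (sum_fv (Hloc i0 j0) (Hrad i0 j0) (Hsoc i0 j0) Hx0).
by apply: big1 => a _; rewrite -mulr_sumr hB mulr0.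
Qed.
Variable w : R -> rat.
Hypothesis Hw : homogeneous_weight w.

Lemma Wlem (x : R) : 1 - w x = G x.
Proof.
case: Hw => Hw0 Hwc Hws.
move: (ltnSn #|lprin x|); move: {2}(#|lprin x|.+1) => N.
elim: N x => // N IH x HxN.
case: (eqVneq x 0) => [->|Hx]; first by rewrite Hw0 G0 subr0.
have H1 : \sum_(y in lprin x) (1 - w y - G y) = 0.
  by rewrite !sumrB sumG // subr0 Hws // sumr_const subrr.
rewrite (bigID (fun y => lprin y == lprin x)) /= in H1.
rewrite [X in _ + X]big1 ?addr0 in H1; last first.
  move=> y /andP[Hy Hne]; have Hsub := lprin_sub Hy.
  have Hp : lprin y \proper lprin x by rewrite properEneq Hne Hsub.
  have Hlt : (#|lprin y| < N)%N.
    by apply: (leq_trans (proper_card Hp)).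
  by rewrite IH // subrr.
rewrite (eq_bigr (fun _ => 1 - w x - G x)) in H1; last first.
  by move=> y /andP[_ /eqP E]; rewrite (Hwc _ _ E) (G_class _ _ E).
rewrite sumr_const in H1.
move/eqP: H1; rewrite mulrn_eq0 => /orP[|/eqP H]; last first.
  by apply/eqP; rewrite -subr_eq0 H.
move/eqP/card0_eq/(_ x) => H.
have : (x \in lprin x) && (lprin x == lprin x) by rewrite mem_lprin eqxx.
by rewrite -[_ && _]/(x \in (fun i : R => (i \in lprin x) && (lprin i == lprin x))) H.
Qed.
Lemma qgt1 i (j : 'I_(n i)) : (1 < q i)%N.
Proof. exact: (q_gt1 (Hloc i j) (Hrad i j)). Qed.

Lemma cq_neq0 i (j : 'I_(n i)) : cq (q i) != 0.
Proof.
have := qgt1 i j; rewrite /cq oppr_eq0 invr_eq0 pnatr_eq0; lia.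
Qed.

Lemma cq_le1 i (j : 'I_(n i)) : `|cq (q i)| <= 1.
Proof.
have := qgt1 i j => Hq.
rewrite /cq normrN normfV normr_nat invf_le1 ?ltr0n; last lia.
by rewrite ler1n; lia.
Qed.

Lemma cq_eq1 i (j : 'I_(n i)) : `|cq (q i)| = 1 -> q i = 2%N.
Proof.
have := qgt1 i j => Hq.
rewrite /cq normrN normfV normr_nat => /eqP; rewrite invr_eq1 pnatr_eq1.
move=> /eqP; lia.
Qed.

Lemma fv_le1 i (j : 'I_(n i)) (v : Rij i j) : 0 <= `|fv (cq (q i)) v| <= 1.
Proof.
rewrite normr_ge0 /= /fv; case: ifP => _; first by rewrite normr1.
by case: ifP => _; [exact: cq_le1 i j | rewrite normr0].
Qed.

Lemma G_notsoc (a : R) : a \notin left_soc R -> G a = 0.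
Proof.
move=> Ha.
have [i [j Hij]] : exists i j, pi i j a \notin left_soc (Rij i j).
  case: (boolP [exists i, [exists j, pi i j a \notin left_soc (Rij i j)]]).
    by case/existsP => i /existsP [j H]; exists i, j.
  rewrite negb_exists => /forallP H; case/negP: Ha; apply/socR => i j.
  by move: (H i); rewrite negb_exists => /forallP /(_ j) /negPn.
have Hf : fv (cq (q i)) (pi i j a) = 0.
  rewrite /fv (negPf Hij); case: eqP => // E; by move: Hij; rewrite E soc0C.
by rewrite /G (bigD1 i) //= (bigD1 j) //= Hf !mul0r.
Qed.

Lemma G_soc (a : R) : a \in left_soc R -> G a != 0.
Proof.
move/socR => Ha; rewrite /G; apply/prodf_neq0 => i _; apply/prodf_neq0 => j _.
rewrite /fv Ha; case: ifP => _; [exact: oner_neq0 | exact: cq_neq0 i j].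
Qed.

Lemma partA1 (a : R) : a \in left_soc R -> w a <> 1.
Proof.
move=> Ha Hw1; have := Wlem a; rewrite Hw1 subrr => /esym /eqP.
by rewrite (negPf (G_soc a Ha)).
Qed.

Lemma w_notsoc (a : R) : a \notin left_soc R -> w a = 1.
Proof.
move=> Ha; have := Wlem a; rewrite (G_notsoc a Ha) => /eqP; rewrite subr_eq0 => /eqP.
by [].
Qed.

Lemma partA2 : left_soc R != [set: R] -> ~: left_soc R \in Phom w.
Proof.
move=> Hne.
have [x0 Hx0] : exists x0, x0 \notin left_soc R.
  have : ~~ ([set: R] \subset left_soc R).
    by apply: contra Hne => H; rewrite eqEsubset H subsetT.
  by case/subsetPn => x0 _ Hx0; exists x0.
apply/imsetP; exists x0 => //; apply/setP => y; rewrite !inE (w_notsoc x0 Hx0).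
case: (boolP (y \in left_soc R)) => Hy /=.
  by apply/esym/eqP; apply: partA1.
by rewrite w_notsoc.
Qed.
Hypothesis q_inj : injective q.

Lemma partB_bwd : (exists i : 'I_t, q i = 2%N /\ (2 <= n i)%N) ->
  exists a : R, a != 0 /\ w a = 0.
Proof.
move=> [i [Hq Hn]].
have Hex i' (j' : 'I_(n i')) : exists m : Rij i' j', (m \in left_soc (Rij i' j')) && (m != 0).
  by case: (soc_nz i' j') => m H1 H2; exists m; rewrite H1 H2.
pose g i' (j' : 'I_(n i')) := if (i' == i) && (j' < 2)%N then xchoose (Hex i' j') else 0.
have Hm i' j' : (xchoose (Hex i' j') \in left_soc (Rij i' j')) && (xchoose (Hex i' j') != 0).
  exact: (xchooseP (Hex i' j')).
have Hn0 : (0 < n i)%N by lia.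
have Hn1 : (1 < n i)%N by lia.
pose j0 := Ordinal Hn0. pose j1 := Ordinal Hn1.
have gin (j : 'I_(n i)) : (j < 2)%N -> fv (cq (q i)) (pi i j (mk g)) = cq (q i).
  move=> Hj; rewrite mkE /g eqxx Hj /=.
  by case/andP: (Hm i j) => H1 H2; rewrite /fv (negPf H2) H1.
have gout i' (j : 'I_(n i')) : ~~ ((i' == i) && (j < 2)%N) -> fv (cq (q i')) (pi i' j (mk g)) = 1.
  by move=> H; rewrite mkE /g (negPf H) fv0.
exists (mk g); split.
  apply/negP => /eqP H.
  have E : pi i j0 (mk g) = xchoose (Hex i j0) by rewrite mkE /g eqxx.
  by move: (Hm i j0); rewrite -E H pi0 eqxx andbF.
have HG : G (mk g) = 1.
  rewrite /G (bigD1 i) //= [X in _ * X]big1 ?mulr1; last first.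
    by move=> i' Hi'; apply: big1 => j _; rewrite gout // (negPf Hi').
  rewrite (bigD1 j0) //= (bigD1 j1) //= [X in _ * (_ * X)]big1 ?mulr1; last first.
    move=> j /andP[Hj0 Hj1]; rewrite gout // eqxx /= -leqNgt.
    case: j Hj0 Hj1 => [[|[|k]] Hk] //=.
  rewrite !gin // /cq Hq (_ : (2.-1)%:R = 1 :> rat) // invr1.
have := Wlem (mk g); rewrite HG => /eqP; rewrite subr_eq (addrC 1) -subr_eq subrr.
by move=> /eqP <-.
Qed.
Lemma partB_fwd : (exists a : R, a != 0 /\ w a = 0) ->
  exists i : 'I_t, q i = 2%N /\ (2 <= n i)%N.
Proof.
move=> [a [Ha0 Hwa]].
have HG : G a = 1 by rewrite -Wlem Hwa subr0.
pose F i j := `|fv (cq (q i)) (pi i j a)|.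
have HF i j : 0 <= F i j <= 1 by apply: fv_le1.
have Hall i j : F i j = 1.
  apply/eqP; rewrite eq_le; case/andP: (HF i j) => H0 -> /=.
  have : `|G a| = 1 by rewrite HG normr1.
  rewrite /G normr_prod (bigD1 i) //= normr_prod (bigD1 j) //=.
  set r1 := \prod_(_ | _) _; set r2 := \prod_(_ | _) _ => E.
  have Hr1 : 0 <= r1 <= 1.
    apply/andP; split; [apply: prodr_ge0 => k _; by case/andP: (HF i k) | apply: prodr_ile1 => k _; exact: HF].
  have Hr2 : 0 <= r2 <= 1.
    apply/andP; split; [apply: prodr_ge0 => k _; exact: normr_ge0 | apply: prodr_ile1 => k _].
    rewrite normr_ge0 /= normr_prod; apply: prodr_ile1 => l _; exact: HF.
  rewrite -E; rewrite -/(F i j).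
  case/andP: Hr1 => Hr10 Hr11; case/andP: Hr2 => Hr20 Hr21.
  by rewrite -mulrA ler_piMr // mulr_ile1.
have Hq_of i j : pi i j a != 0 -> q i = 2%N.
  move=> Hnz; have := Hall i j; rewrite /F /fv (negPf Hnz).
  by case: ifP => _; [apply: cq_eq1 | rewrite normr0 => /eqP; rewrite eq_sym oner_eq0].
case: (neq0_comp Ha0) => i0 [j0 Hij0].
have Hqi0 := Hq_of i0 j0 Hij0.
case: (leqP 2 (n i0)) => Hn; first by exists i0.
exfalso.
have Hoff i j : tg i j != tg i0 j0 -> pi i j a = 0.
  move=> Hne; apply/eqP/negPn/negP => Hnz.
  have := Hq_of i j Hnz; rewrite -Hqi0 => /q_inj Ei; subst i.
  move: Hne; rewrite tg_eq => /eqP; apply; apply: val_inj.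
  by case: j Hnz => [[|k] Hk] //=; case: j0 Hij0 => [[|k'] Hk'] //= _ _; lia.
have := G_single i0 j0 a Hoff; rewrite HG /fv (negPf Hij0).
case: ifP => _; last by move=> /eqP; rewrite oner_eq0.
rewrite /cq Hqi0 (_ : (2.-1)%:R = 1 :> rat) // invr1 => /eqP.
Qed.
Lemma main_sec :
  ((forall a : R, a \in left_soc R -> w a <> 1) /\
   (left_soc R != [set: R] -> ~: left_soc R \in Phom w))
  /\ ((exists a : R, a != 0 /\ w a = 0) <->
      (exists i : 'I_t, q i = 2%N /\ (2 <= n i)%N)).
Proof.
split; first by split; [exact: partA1 | exact: partA2].
by split; [exact: partB_fwd | exact: partB_bwd].
Qed.

End Big.

Section Char.
Variable R : finPzRingType.

Lemma char_norm (chi : R -> algC) : is_char chi -> forall z, `|chi z| = 1.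
Proof.
case=> chi0 chiD z.
have chiX m : chi (z *+ m) = chi z ^+ m.
  by elim: m => [|m IH]; rewrite ?mulr0n ?expr0 // mulrS chiD IH exprS.
pose N := #|R|.+1.
pose f (k : 'I_N) := z *+ k.
have : [exists k1 : 'I_N, [exists k2 : 'I_N, (k1 < k2)%N && (f k1 == f k2)]].
  case: (boolP [exists k1 : 'I_N, [exists k2 : 'I_N, (k1 < k2)%N && (f k1 == f k2)]]) => // H0.
  exfalso; move: H0; rewrite negb_exists => /forallP H.
  have Hinj : injective f.
    move=> k1 k2 E; case: (ltngtP k1 k2) => Hlt.
    - by move: (H k1); rewrite negb_exists => /forallP /(_ k2); rewrite Hlt E eqxx.
    - by move: (H k2); rewrite negb_exists => /forallP /(_ k1); rewrite Hlt E eqxx.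
    - exact: val_inj.
  by have := leq_card f Hinj; rewrite card_ord /N ltnn.
case/existsP => k1 /existsP [k2 /andP [Hlt /eqP E]].
have Hd : z *+ (k2 - k1) = 0.
  apply: (addrI (z *+ k1)); rewrite -mulrnDr subnKC ?addr0; last exact: ltnW.
  by rewrite /f in E; rewrite E.
have : chi z ^+ (k2 - k1) = 1 by rewrite -chiX Hd chi0.
move=> /(congr1 Num.norm); rewrite normrX normr1 => /eqP.
by rewrite pexpr_eq1 ?subn_gt0 // => /eqP.
Qed.

Lemma char_nonrefl (w : R -> rat) (chi : R -> algC) (a : R) :
  generating_char chi -> a != 0 -> w a = w 0 -> ~ reflexive_partition chi (Phom w).
Proof.
move=> [Hchi [chi_inj _]] Ha Hwa Hrefl.
have Hn := char_norm chi Hchi.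
case: Hchi => chi0 _.
have Blk : [set y | w y == w a] \in Phom w by apply: imset_f.
rewrite -Hrefl in Blk; case/imsetP: Blk => c _ Ec.
have H0 : (0 : R) \in [set y | w y == w a] by rewrite inE Hwa.
have Ha' : a \in [set y | w y == w a] by rewrite inE.
rewrite Ec inE in H0; rewrite Ec inE in Ha'.
have Hall : forall b : R, chi (b * a) = 1.
  move=> b.
  pose Bb := [set a' | [forall B in Phom w,
        \sum_(x in B) chi (b * x) == \sum_(x in B) chi (a' * x)]].
  have HBb : Bb \in rdual chi (Phom w) by apply: imset_f.
  have HbB : b \in Bb by rewrite inE; apply/forall_inP => B _.
  have E1 := forall_inP H0 Bb HBb; have E2 := forall_inP Ha' Bb HBb.
  have Esum : \sum_(x in Bb) chi (x * a) = \sum_(x in Bb) 1.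
    rewrite -(eqP E2) (eqP E1); apply: eq_bigr => x _; by rewrite mulr0 chi0.
  apply: (normC_sum_upper _ Esum) => // x _; by rewrite Hn.
have : (fun x => chi (x * a)) = (fun x => chi (x * 0)).
  by apply: functional_extensionality => x; rewrite Hall mulr0 chi0.
by move/chi_inj => /eqP; rewrite (negPf Ha).
Qed.

End Char.

Theorem mainTheorem7 (R : finPzRingType) (t : nat) (n q : 'I_t -> nat)
  (Rij : forall i : 'I_t, 'I_(n i) -> finPzRingType)
  (pi : forall (i : 'I_t) (j : 'I_(n i)), {rmorphism R -> Rij i j})
  (pi_inj : forall x y : R, (forall i j, pi i j x = pi i j y) -> x = y)
  (pi_surj : forall g : (forall (i : 'I_t) (j : 'I_(n i)), Rij i j),
      exists x : R, forall i j, pi i j x = g i j)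
  (q_inj : injective q)
  (Hloc : forall i j, local_ring (Rij i j))
  (Hfrob : forall i j, frobenius (Rij i j))
  (Hrad : forall i j, card_quot (jac_rad (Rij i j)) = q i)
  (Hsoc : forall i j, #|left_soc (Rij i j)| = q i)
  (w : R -> rat) (Hw : homogeneous_weight w) :
  ((forall a : R, a \in left_soc R -> w a <> 1) /\
   (left_soc R != [set: R] -> ~: left_soc R \in Phom w))
  /\ ((exists a : R, a != 0 /\ w a = 0) <->
      (exists i : 'I_t, q i = 2%N /\ (2 <= n i)%N))
  /\ ((exists i : 'I_t, q i = 2%N /\ (2 <= n i)%N) ->
      forall chi : R -> algC, generating_char chi ->
        ~ reflexive_partition chi (Phom w)).
Proof.
have [HA HB] := main_sec R t n q Rij pi pi_inj pi_surj Hloc Hrad Hsoc w Hw q_inj.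
split; first exact: HA.
split; first exact: HB.
move=> Hex chi Hchi.
case: (proj2 HB Hex) => a [Ha Hwa].
apply: (char_nonrefl R w chi a Hchi Ha).
by rewrite Hwa; case: Hw => ->.
Qed.
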